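(* Let $S$ be an intra-regular $\Gamma$-AG$^{**}$-groupoid and $A\subseteq S$ nonempty. Then $A$ is a $\Gamma$-bi-ideal (respectively $\Gamma$-generalized bi-ideal) of $S$ if and only if $(A\Gamma S)\Gamma A=A$ and $A\Gamma A=A$.
   Context: Let $S$ and $\Gamma$ be nonempty sets with a map $S\times\Gamma\times S\to S$, $(x,\gamma,y)\mapsto x\gamma y$. $S$ is a $\Gamma$-AG-groupoid if $(x\gamma y)\delta z=(z\gamma y)\delta x$ for all $x,y,z\in S$, $\gamma,\delta\in\Gamma$; it is a $\Gamma$-AG$^{**}$-groupoid if moreover $a\alpha(b\beta c)=b\alpha(a\beta c)$ for all $a,b,c\in S$, $\alpha,\beta\in\Gamma$. For subsets $A,B\subseteq S$, $A\Gamma B=\{a\gamma b: a\in A,\gamma\in\Gamma,b\in B\}$. $S$ is intra-regular if for every $a\in S$ there exist $x,y\in S$ and $\beta,\gamma,\delta\in\Gamma$ with $a=(x\beta(a\delta a))\gamma y$. A nonempty subset $B\subseteq S$ is a $\Gamma$-generalized bi-ideal if $(B\Gamma S)\Gamma B\subseteq B$, and a $\Gamma$-bi-ideal if in addition $B\Gamma B\subseteq B$. *)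

(* Defs.v *)
Set Implicit Arguments.

Definition fullset (S : Type) : S -> Prop := fun _ => True.

Section GammaDefs.
Variables (S G : Type) (op : S -> G -> S -> S).

Definition GammaAG : Prop :=
  forall (x y z : S) (g d : G), op (op x g y) d z = op (op z g y) d x.

Definition GammaAGss : Prop :=
  GammaAG /\ forall (a b c : S) (al be : G), op a al (op b be c) = op b al (op a be c).

Definition gprod (A B : S -> Prop) : S -> Prop :=
  fun s => exists a g b, A a /\ B b /\ s = op a g b.


Definition subset (A B : S -> Prop) : Prop := forall s, A s -> B s.
Definition set_eq (A B : S -> Prop) : Prop := forall s, A s <-> B s.

Definition intra_regular : Prop :=
  forall a : S, exists (x y : S) (be ga de : G),
    a = op (op x be (op a de a)) ga y.

Definition gen_bi_ideal (B : S -> Prop) : Prop :=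
  (exists b, B b) /\ subset (gprod (gprod B (@fullset S)) B) B.

Definition bi_ideal (B : S -> Prop) : Prop :=
  gen_bi_ideal B /\ subset (gprod B B) B.

End GammaDefs.

(* Main.v *)
Require Import Defs.
Set Implicit Arguments.

Section Aux.
Variables (S Gm : Type) (op : S -> Gm -> S -> S).
Hypothesis hLI : forall (x y z : S) (g d : Gm), op (op x g y) d z = op (op z g y) d x.
Hypothesis hAG : forall (a b c : S) (al be : Gm), op a al (op b be c) = op b al (op a be c).

Lemma L1 (a x y : S) (B C D : Gm) (ha : a = op (op x B (op a D a)) C y) :
  a = (op (op a B (op (op (op y D (op x C y)) B (op x D (op x B (op a D a)))) C y)) C a).
Proof. exact (eq_trans (eq_trans (eq_trans (eq_trans (eq_trans (eq_trans (eq_trans (eq_trans (eq_trans (eq_trans ha (f_equal (fun p => op p C y) (hAG x a a B D))) (hLI a (op x D a) y B C)) (f_equal (fun p => op p C a) (f_equal (fun q => op y B q) (f_equal (fun q => op x D q) ha)))) (f_equal (fun p => op p C a) (f_equal (fun q => op y B q) (hAG x (op x B (op a D a)) y D C)))) (f_equal (fun p => op p C a) (hAG y (op x B (op a D a)) (op x C y) B D))) (f_equal (fun p => op p C a) (f_equal (fun p => op p B (op y D (op x C y))) (f_equal (fun q => op x B q) (f_equal (fun p => op p D a) ha))))) (f_equal (fun p => op p C a) (f_equal (fun p => op p B (op y D (op x C y))) (f_equal (fun q => op x B q) (hLI (op x B (op a D a)) y a C D))))) (f_equal (fun p => op p C a) (f_equal (fun p => op p B (op y D (op x C y))) (hAG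 x (op a C y) (op x B (op a D a)) B D)))) (f_equal (fun p => op p C a) (hLI (op a C y) (op x D (op x B (op a D a))) (op y D (op x C y)) B B))) (f_equal (fun p => op p C a) (hAG (op (op y D (op x C y)) B (op x D (op x B (op a D a)))) a y B C))). Qed.

Lemma L2 (a b s u : S) (b1 g1 b2 g2 G : Gm) (ha : a = op (op a b1 s) g1 a) (hb : b = op (op b b2 u) g2 b) :
  op a G b = (op (op b b2 (op (op u g2 (op a b1 s)) g1 a)) G b).
Proof. exact (eq_trans (eq_trans (eq_trans (eq_trans (eq_trans (eq_trans (f_equal (fun p => op p G b) ha) (f_equal (fun q => op (op (op a b1 s) g1 a) G q) hb)) (hAG (op (op a b1 s) g1 a) (op b b2 u) b G g2)) (hLI b u (op (op (op a b1 s) g1 a) g2 b) b2 G)) (f_equal (fun p => op p G b) (f_equal (fun p => op p b2 u) (hLI (op a b1 s) a b g1 g2)))) (f_equal (fun p => op p G b) (hLI (op b g1 a) (op a b1 s) u g2 b2))) (f_equal (fun p => op p G b) (hAG (op u g2 (op a b1 s)) b a b2 g1))). Qed.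

Lemma L3 (a x y : S) (B C D : Gm) (ha : a = op (op x B (op a D a)) C y) :
  a = (op a C (op (op a D (op (op (op y B x) B x) C y)) D a)).
Proof. exact (eq_trans (eq_trans (eq_trans (eq_trans (eq_trans (eq_trans (eq_trans (eq_trans (eq_trans (eq_trans ha (f_equal (fun p => op p C y) (f_equal (fun q => op x B q) (f_equal (fun q => op a D q) ha)))) (f_equal (fun p => op p C y) (f_equal (fun q => op x B q) (hAG a (op x B (op a D a)) y D C)))) (f_equal (fun p => op p C y) (hAG x (op x B (op a D a)) (op a C y) B D))) (f_equal (fun p => op p C y) (hLI x (op a D a) (op x D (op a C y)) B B))) (hLI (op (op x D (op a C y)) B (op a D a)) x y B C)) (f_equal (fun q => op (op y B x) C q) (hLI x (op a C y) (op a D a) D B))) (hAG (op y B x) (op (op a D a) D (op a C y)) x C B)) (hLI (op a D a) (op a C y) (op (op y B x) B x) D C)) (hAG (op (op (op y B x) B x) D (op a C y)) a a C D)) (f_equal (fun q => op a C q) (f_equal (fun p => op p D a) (hAG (op (op y B x) B x) a y D C)))). Qed.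
End Aux.

Lemma self_ex (S G : Type) (op : S -> G -> S -> S) (hS : GammaAGss op) (hir : intra_regular op) (a : S) :
  exists s b g, a = op (op a b s) g a.
Proof.
  destruct hS as [hLI hAG]. destruct (hir a) as (x & y & be & ga & de & ha).
  eexists _, be, ga. exact (@L1 _ _ op hLI hAG _ _ _ _ _ _ ha).
Qed.

Lemma gen_to (S G : Type) (op : S -> G -> S -> S) (hS : GammaAGss op) (hir : intra_regular op)
  (A : S -> Prop) (h : gen_bi_ideal op A) :
  set_eq (gprod op (gprod op A (@fullset S)) A) A /\ set_eq (gprod op A A) A.
Proof.
  destruct h as [_ hsub].
  assert (hS' := hS). destruct hS' as [hLI hAG].
  split; intro s; split.
  - apply hsub.
  - intro hs. destruct (self_ex hS hir s) as (t & b & g & e).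
    exists (op s b t), g, s. split; [|split; [exact hs|exact e]].
    exists s, b, t. repeat split; auto.
  - intros (a & g & b & ha & hb & ->).
    destruct (self_ex hS hir a) as (t & b1 & g1 & e1).
    destruct (self_ex hS hir b) as (u & b2 & g2 & e2).
    rewrite (@L2 _ _ op hLI hAG _ _ _ _ _ _ _ _ g e1 e2). apply hsub.
    eexists _, g, b. split; [|split; [exact hb|reflexivity]].
    eexists b, b2, _. repeat split; auto.
  - intro hs. destruct (hir s) as (x & y & be & ga & de & e).
    rewrite (@L3 _ _ op hLI hAG _ _ _ _ _ _ e).
    eexists s, ga, _. split; [exact hs|split; [|reflexivity]].
    apply hsub. eexists _, de, s. split; [|split; [exact hs|reflexivity]].
    eexists s, de, _. repeat split; auto.
Qed.

Theorem mainTheorem5 (S G : Type) (op : S -> G -> S -> S)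
  (hG : inhabited G)
  (hS : GammaAGss op) (hir : intra_regular op)
  (A : S -> Prop) (hA : exists a, A a) :
  (bi_ideal op A <->
     (set_eq (gprod op (gprod op A (@fullset S)) A) A /\ set_eq (gprod op A A) A))
  /\
  (gen_bi_ideal op A <->
     (set_eq (gprod op (gprod op A (@fullset S)) A) A /\ set_eq (gprod op A A) A)).
Proof.
  split; split.
  - intros [h _]. exact (gen_to hS hir h).
  - intros [h1 h2]. split; [split; [exact hA|]|]; intros s hs; [apply h1|apply h2]; exact hs.
  - intro h. exact (gen_to hS hir h).
  - intros [h1 h2]. split; [exact hA|]. intros s hs; apply h1; exact hs.
Qed.
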